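(* Let $C$ be a boundedly compact subset of a metric space $(X,d)$, $T:C\to C$ continuous with $F:=\mathrm{Fix}(T)\ne\emptyset$, and $G,H:\mathbb{R}_+\to\mathbb{R}_+$ satisfying properties (G) and (H). Assume that the sequence $(x_n)$ in $C$ is bounded, $(G,H)$-Fej\'er monotone with respect to $F$, and has approximate fixed points. Then $(x_n)$ converges to a fixed point of $T$. The same conclusion holds if the continuity of $T$ is replaced by the assumption that $F$ is explicitly closed with respect to the representation $\tilde F_k:=\{x\in C\mid d(x,Tx)\le\frac1{k+1}\}$.
   Context: $C$ is boundedly compact if every bounded sequence in $C$ has a subsequence converging in $C$. Property (G): $a_n\to0\Rightarrow G(a_n)\to0$; property (H): $H(a_n)\to0\Rightarrow a_n\to0$ (for all sequences in $\mathbb{R}_+$). $(x_n)$ is $(G,H)$-Fej\'er monotone w.r.t. $F$ if $H(d(x_{n+m},p))\le G(d(x_n,p))$ for all $n,m\in\mathbb{N}$, $p\in F$. $(x_n)$ has approximate fixed points if for every $k$ there is $N$ with $d(x_N,Tx_N)\le\frac1{k+1}$. With $AF_k:=\bigcap_{l\le k}\tilde F_l$, $F$ is explicitly closed if for every $p\in C$: if $AF_M\cap\overline B(p,1/(N+1))\ne\emptyset$ for all $N,M$, then $p\in F$. *)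

(* Defs.v *)
From Stdlib Require Export Reals.
Open Scope R_scope.

Section Metric.
Context {X : Type}.

Definition is_metric (d : X -> X -> R) : Prop :=
  (forall x y, 0 <= d x y) /\
  (forall x y, d x y = 0 <-> x = y) /\
  (forall x y, d x y = d y x) /\
  (forall x y z, d x z <= d x y + d y z).

Definition converges_to (d : X -> X -> R) (x : nat -> X) (p : X) : Prop :=
  forall eps, 0 < eps -> exists N, forall n, (N <= n)%nat -> d (x n) p < eps.

Definition bounded_seq (d : X -> X -> R) (x : nat -> X) : Prop :=
  exists (q : X) (M : R), forall n, d (x n) q <= M.

Definition boundedly_compact (d : X -> X -> R) (C : X -> Prop) : Prop :=
  forall x : nat -> X, (forall n, C (x n)) -> bounded_seq d x ->
  exists (phi : nat -> nat) (p : X),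
    (forall n, (phi n < phi (S n))%nat) /\ C p /\ converges_to d (fun n => x (phi n)) p.

Definition continuous_on (d : X -> X -> R) (C : X -> Prop) (T : X -> X) : Prop :=
  forall x, C x -> forall eps, 0 < eps -> exists delta, 0 < delta /\
    forall y, C y -> d x y < delta -> d (T x) (T y) < eps.

Definition Fix (C : X -> Prop) (T : X -> X) (p : X) : Prop := C p /\ T p = p.

Definition prop_G (G : R -> R) : Prop :=
  forall a : nat -> R, (forall n, 0 <= a n) -> Un_cv a 0 -> Un_cv (fun n => G (a n)) 0.

Definition prop_H (H : R -> R) : Prop :=
  forall a : nat -> R, (forall n, 0 <= a n) -> Un_cv (fun n => H (a n)) 0 -> Un_cv a 0.

Definition nonneg_on_nonneg (G : R -> R) : Prop :=
  forall t, 0 <= t -> 0 <= G t.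

Definition GH_Fejer_monotone (d : X -> X -> R) (G H : R -> R) (F : X -> Prop)
  (x : nat -> X) : Prop :=
  forall n m p, F p -> H (d (x (n + m)%nat) p) <= G (d (x n) p).

Definition has_approx_fixed_points (d : X -> X -> R) (T : X -> X) (x : nat -> X) : Prop :=
  forall k : nat, exists N, d (x N) (T (x N)) <= 1 / (INR k + 1).

Definition Ftilde (d : X -> X -> R) (C : X -> Prop) (T : X -> X) (k : nat) (y : X) : Prop :=
  C y /\ d y (T y) <= 1 / (INR k + 1).

Definition AF (d : X -> X -> R) (C : X -> Prop) (T : X -> X) (k : nat) (y : X) : Prop :=
  forall l, (l <= k)%nat -> Ftilde d C T l y.

Definition cball (d : X -> X -> R) (p : X) (r : R) (y : X) : Prop := d p y <= r.

Definition explicitly_closed (d : X -> X -> R) (C : X -> Prop) (T : X -> X)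
  (F : X -> Prop) : Prop :=
  forall p, C p ->
    (forall N M : nat, exists y, AF d C T M y /\ cball d p (1 / (INR N + 1)) y) -> F p.

End Metric.

(* Main.v *)
Require Import Defs.
From Stdlib Require Import Reals.
From Stdlib Require Import Lra Lia ClassicalEpsilon.
Open Scope R_scope.

Lemma inv_mono (a b : nat) : (a <= b)%nat -> 1/(INR b+1) <= 1/(INR a+1).
Proof.
  intro h. unfold Rdiv. rewrite !Rmult_1_l. apply Rinv_le_contravar.
  - pose proof (pos_INR a). lra.
  - apply le_INR in h. lra.
Qed.

Lemma arch_inv (e : R) : 0 < e -> exists K : nat, 1/(INR K+1) < e.
Proof.
  intro he. destruct (archimed_cor1 e he) as [N [h1 h2]]. exists N.
  eapply Rle_lt_trans; [|exact h1].
  unfold Rdiv; rewrite Rmult_1_l. apply Rinv_le_contravar.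
  - apply lt_0_INR; lia.
  - lra.
Qed.

Lemma phi_ge (phi : nat -> nat) : (forall n, (phi n < phi (S n))%nat) -> forall k, (k <= phi k)%nat.
Proof. intros h k; induction k; [lia|]. specialize (h k); lia. Qed.

Theorem proposition7p3 (X : Type) (d : X -> X -> R) (C : X -> Prop) (T : X -> X)
  (G H : R -> R) (x : nat -> X) :
  is_metric d ->
  boundedly_compact d C ->
  (forall y, C y -> C (T y)) ->
  (exists p, Fix C T p) ->
  nonneg_on_nonneg G -> nonneg_on_nonneg H ->
  prop_G G -> prop_H H ->
  (forall n, C (x n)) ->
  bounded_seq d x ->
  GH_Fejer_monotone d G H (Fix C T) x ->
  has_approx_fixed_points d T x ->
  (continuous_on d C T \/ explicitly_closed d C T (Fix C T)) ->
  exists p, Fix C T p /\ converges_to d x p.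
Proof.
  intros [dpos [deq [dsym dtri]]] bc CT _ Gnn Hnn pG pH Cx bx Fej afp Hcase.
  assert (Hf : exists f : nat -> nat, forall k, d (x (f k)) (T (x (f k))) <= 1 / (INR k + 1)).
  { exists (fun k => proj1_sig (constructive_indefinite_description _ (afp k))).
    intro k. exact (proj2_sig (constructive_indefinite_description _ (afp k))). }
  destruct Hf as [f Hf].
  destruct (bc (fun k => x (f k))) as [phi [p [phiinc [Cp cvp]]]].
  { intro; apply Cx. }
  { destruct bx as [q [M hM]]. exists q, M. intro; apply hM. }
  simpl in cvp.
  set (z := fun k => x (f (phi k))) in *.
  assert (Hz : forall k, d (z k) (T (z k)) <= 1/(INR k + 1)).
  { intro k. unfold z. eapply Rle_trans; [apply Hf|]. apply inv_mono, phi_ge, phiinc. }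
  assert (Fp : Fix C T p).
  { split; [exact Cp|].
    destruct Hcase as [cont | ecl].
    - assert (h0 : d p (T p) = 0).
      { destruct (Req_dec (d p (T p)) 0) as [e|ne]; [exact e|].
        exfalso. set (eps := d p (T p)). assert (epos : 0 < eps) by (pose proof (dpos p (T p)); unfold eps in *; lra).
        destruct (cont p Cp (eps/3)) as [delta [dp hd]]; [lra|].
        destruct (cvp (Rmin delta (eps/3))) as [K1 hK1]; [apply Rmin_pos; lra|].
        destruct (arch_inv (eps/3)) as [K2 hK2]; [lra|].
        set (k := max K1 K2).
        specialize (hK1 k ltac:(unfold k; lia)). fold z in hK1.
        pose proof (Rmin_l delta (eps/3)). pose proof (Rmin_r delta (eps/3)).
        assert (a1 : d p (z k) < delta) by (rewrite dsym; lra).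
        specialize (hd (z k) ltac:(unfold z; apply Cx) a1).
        pose proof (Hz k). pose proof (inv_mono K2 k ltac:(unfold k; lia)).
        pose proof (dtri p (z k) (T p)). pose proof (dtri (z k) (T (z k)) (T p)).
        rewrite (dsym (T (z k)) (T p)) in *. rewrite (dsym p (z k)) in *.
        unfold eps in *. lra. }
      symmetry. apply deq. exact h0.
    - apply ecl; [exact Cp|]. intros N M.
      destruct (cvp (1/(INR N+1))) as [K hK].
      { unfold Rdiv; rewrite Rmult_1_l. apply Rinv_0_lt_compat. pose proof (pos_INR N); lra. }
      set (k := max K M). exists (z k). split.
      + intros l hl. split; [unfold z; apply Cx|].
        eapply Rle_trans; [apply Hz|]. apply inv_mono. unfold k; lia.
      + unfold cball. rewrite dsym. left. apply hK. unfold k; lia. }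
  exists p. split; [exact Fp|].
  set (a := fun n => d (x n) p).
  assert (cva : Un_cv a 0).
  { apply pH; [intro; apply dpos|].
    assert (cvb : Un_cv (fun k => G (d (z k) p)) 0).
    { apply (pG (fun k => d (z k) p)); [intro; apply dpos|].
      intros eps he. destruct (cvp eps he) as [K hK]. exists K. intros n hn.
      unfold R_dist. rewrite Rminus_0_r, Rabs_right by (apply Rle_ge, dpos). apply hK; lia. }
    intros eps he. destruct (cvb eps he) as [K hK]. exists (f (phi K)). intros n hn.
    specialize (hK K (le_n K)). unfold R_dist in *. rewrite Rminus_0_r in *.
    unfold a. rewrite Rabs_right by (apply Rle_ge, Hnn, dpos).
    pose proof (Fej (f (phi K)) (n - f (phi K))%nat p Fp) as hF.
    replace (f (phi K) + (n - f (phi K)))%nat with n in hF by lia.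
    pose proof (Rle_abs (G (d (z K) p))). unfold z in *. lra. }
  intros eps he. destruct (cva eps he) as [N hN]. exists N. intros n hn.
  specialize (hN n ltac:(lia)). unfold R_dist, a in hN.
  rewrite Rminus_0_r, Rabs_right in hN by (apply Rle_ge, dpos). exact hN.
Qed.
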